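(* Let $\Gamma_\mu:\mathbb{R}^N_+\to\mathbb{R}^N_+$ be monotone, let $\kappa_0>0$, $\kappa_\Gamma>\kappa_h>0$, $\delta>0$, let $\phi$ be as in the context, and let $c\in\mathbb{R}^N_+$ with $\|c\|<\kappa_\Gamma/2$. Let $\tau=\langle y^1,\dots,y^{N+1}\rangle$ be an $N$-simplex of the triangulation $\tilde K_1(\delta)$ with vertices $y^j=(v^j,t_j)\in\mathbb{R}^N_+\times\{0,1\}$ such that $\|v^j\|>\kappa_\Gamma+\kappa_0+\delta$ for all $j=1,\dots,N+1$. Then $\tau$ is not complete (with respect to the labeling $l$ defined below).
   Context: Order on $\mathbb{R}^N$: $v\ge w$ iff $v_i\ge w_i$ for all $i$; $v>w$ iff $v\ge w$, $v\ne w$; $v\gg w$ iff $v_i>w_i$ for all $i$. $\|\cdot\|$ is the Euclidean norm, $e=(1,\dots,1)^\top$. Given $\kappa_0>0$, $\kappa_\Gamma>\kappa_h>0$, define $\phi:\mathbb{R}^N_+\to\mathbb{R}^N$ by $\phi(v)=\Gamma_\mu(v)\big(1+\min\{0,\frac{\kappa_\Gamma-2\|v\|}{\|v\|+\kappa_0}\}\big)+\max\{0,\kappa_h-2\|v\|\}e$. Triangulation $\tilde K_1(\delta)$: let $P=\mathrm{diag}(\delta,\dots,\delta,1)\in\mathbb{R}^{(N+1)\times(N+1)}$; its $(N+1)$-simplices are $\langle y^1,\dots,y^{N+2}\rangle$ where $y^1=(\delta z,0)$ with $z\in\mathbb{Z}^N$, and $y^{i+1}=y^i+Pe_{\pi(i)}$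 for $i=1,\dots,N+1$, $\pi$ a permutation of $\{1,\dots,N+1\}$ ($e_k$ the $k$-th unit vector of $\mathbb{R}^{N+1}$); in particular $y^{N+2}=y^1+(\delta,\dots,\delta,1)^\top$, all vertices lie in $\mathbb{R}^N\times\{0,1\}$, and $y^1<y^2<\dots<y^{N+2}$. Its $N$-simplices are the facets of these $(N+1)$-simplices, with vertices listed in increasing order. Homotopy: $\vartheta(v,t)=(1-t)c+t\phi(v)$; labeling: $l(v,t)=\vartheta(v,t)-v$ for vertices $(v,t)\in\mathbb{R}^N_+\times\{0,1\}$. Labeling matrix of $\tau=\langle y^1,\dots,y^{N+1}\rangle$: the $(N+1)\times(N+1)$ matrix $L(\tau)$ with $j$-th column $(1,l(y^j)^\top)^\top$. A matrix $W$ is lexicographically positive ($W\succ0$) if the first nonzero entry of each row is positive. $\tau$ is complete if there is $W$ with $L(\tau)W=I_{N+1}$ and $W\succ0$. *)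

(* Defs.v *)
(* the statement is algebraic/order-theoretic, stated over an
   arbitrary real closed field R (which includes the reals). *)
From HB Require Import structures.
From mathcomp Require Import all_boot all_order all_algebra all_fingroup.
Set Implicit Arguments. Unset Strict Implicit. Unset Printing Implicit Defensive.
Import Order.TTheory GRing.Theory Num.Theory.
Local Open Scope ring_scope.

Section Defs.
Variable R : rcfType.

Definition vge (N : nat) (v w : 'cV[R]_N) : Prop := forall i, w i 0 <= v i 0.
Definition nonneg (N : nat) (v : 'cV[R]_N) : Prop := forall i, 0 <= v i 0.

Definition enorm (N : nat) (v : 'cV[R]_N) : R := Num.sqrt (\sum_i v i 0 ^+ 2).

Definition evec (N : nat) : 'cV[R]_N := const_mx 1.

(* Gamma_mu : R^N_+ -> R^N_+ monotone (represented as a total map on R^N,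
   constrained only on R^N_+). *)
Definition monotone_on_nonneg (N : nat) (G : 'cV[R]_N -> 'cV[R]_N) : Prop :=
  (forall v, nonneg v -> nonneg (G v)) /\
  (forall v w, nonneg v -> nonneg w -> vge v w -> vge (G v) (G w)).

Definition phi (N : nat) (G : 'cV[R]_N -> 'cV[R]_N) (k0 kG kh : R)
  (v : 'cV[R]_N) : 'cV[R]_N :=
  (1 + Num.min 0 ((kG - 2 * enorm v) / (enorm v + k0))) *: G v
  + Num.max 0 (kh - 2 * enorm v) *: evec N.

Definition vartheta (N : nat) (G : 'cV[R]_N -> 'cV[R]_N) (k0 kG kh : R)
  (c : 'cV[R]_N) (v : 'cV[R]_N) (t : R) : 'cV[R]_N :=
  (1 - t) *: c + t *: phi G k0 kG kh v.

Definition label (N : nat) (G : 'cV[R]_N -> 'cV[R]_N) (k0 kG kh : R)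
  (c : 'cV[R]_N) (v : 'cV[R]_N) (t : R) : 'cV[R]_N :=
  vartheta G k0 kG kh c v t - v.

Definition spat (N : nat) (y : 'cV[R]_N.+1) : 'cV[R]_N :=
  \col_(j < N) y (widen_ord (leqnSn N) j) 0.
Definition tim (N : nat) (y : 'cV[R]_N.+1) : R := y ord_max 0.

Definition Pmat (N : nat) (delta : R) : 'M[R]_N.+1 :=
  diag_mx (\row_(i < N.+1) if i == ord_max then 1 else delta).

Definition unitv (N : nat) (k : 'I_N.+1) : 'cV[R]_N.+1 := delta_mx k 0.

(* Vertex i (0-indexed, i = 0..N+1) of the (N+1)-simplex of K~1(delta)
   determined by z in Z^N and the permutation pi:
   y^1 = (delta z, 0), y^{i+1} = y^i + P e_{pi(i)}. *)
Definition kvert (N : nat) (delta : R) (z : 'I_N -> int) (pi : 'S_N.+1)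
  (i : 'I_N.+2) : 'cV[R]_N.+1 :=
  \col_(j < N.+1) (if unlift ord_max j is Some j' then delta * (z j')%:~R else 0)
  + \sum_(k < N.+1 | (k < i)%N) Pmat N delta *m unitv (pi k).

(* The N-simplex obtained by deleting vertex r; vertices listed in
   increasing order (j |-> lift r j is increasing). *)
Definition fvert (N : nat) (delta : R) (z : 'I_N -> int) (pi : 'S_N.+1)
  (r : 'I_N.+2) (j : 'I_N.+1) : 'cV[R]_N.+1 :=
  kvert delta z pi (lift r j).

Definition labmat (N : nat) (G : 'cV[R]_N -> 'cV[R]_N) (k0 kG kh : R)
  (c : 'cV[R]_N) (y : 'I_N.+1 -> 'cV[R]_N.+1) : 'M[R]_N.+1 :=
  \matrix_(i < N.+1, j < N.+1)
     (col_mx (1%:M : 'M[R]_1) (label G k0 kG kh c (spat (y j)) (tim (y j)))) i 0.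

Definition lexpos (m n : nat) (W : 'M[R]_(m, n)) : Prop :=
  forall i, exists j, 0 < W i j /\ (forall k : 'I_n, (k < j)%N -> W i k = 0).

Definition complete (N : nat) (G : 'cV[R]_N -> 'cV[R]_N) (k0 kG kh : R)
  (c : 'cV[R]_N) (y : 'I_N.+1 -> 'cV[R]_N.+1) : Prop :=
  exists W : 'M[R]_N.+1, labmat G k0 kG kh c y *m W = 1%:M /\ lexpos W.

End Defs.

(* Main.v *)
Require Import Defs.
From mathcomp Require Import all_boot all_order all_algebra all_fingroup.
From mathcomp Require Import lra zify.
Import Order.TTheory GRing.Theory Num.Theory.
Local Open Scope ring_scope.

Section H.
Variable R : rcfType.
Variables (N : nat) (delta : R) (z : 'I_N -> int) (pi : 'S_N.+1).

Lemma kvertE (i : 'I_N.+2) (j : 'I_N.+1) :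
  kvert delta z pi i j 0 =
  (if unlift ord_max j is Some j' then delta * (z j')%:~R else 0) +
  \sum_(k < N.+1 | (k < i)%N) (if j == ord_max then 1 else delta) * (j == pi k)%:R.
Proof.
rewrite /kvert !mxE summxE; congr (_ + _); apply: eq_bigr => k _.
by rewrite /Pmat /unitv mul_diag_mx !mxE andbT.
Qed.

Lemma sum_mono (x : 'I_N.+1 -> R) (i i' : nat) : (forall k, 0 <= x k) -> (i <= i')%N ->
  \sum_(k < N.+1 | (k < i)%N) x k <= \sum_(k < N.+1 | (k < i')%N) x k.
Proof.
move=> hx hi; rewrite [X in X <= _]big_mkcond [X in _ <= X]big_mkcond /=.
apply: ler_sum => k _; case: ifP => h1; case: ifP => h2 //.
  by rewrite (leq_trans h1 hi) in h2.
Qed.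

Lemma tim_bounds (i : 'I_N.+2) : 0 <= tim (kvert delta z pi i) <= 1.
Proof.
rewrite /tim kvertE unlift_none add0r eqxx.
apply/andP; split.
  by apply: sumr_ge0 => k _; rewrite mul1r ler0n.
apply: (le_trans (y := \sum_(k < N.+1) 1 * (ord_max == pi k)%:R)).
  rewrite [X in _ <= X](bigID (fun k : 'I_N.+1 => (k < i)%N)) /= lerDl.
  by apply: sumr_ge0 => k _; rewrite mul1r ler0n.
rewrite (reindex_inj (@perm_inj _ pi^-1)) /=.
rewrite (bigD1 ord_max) //= permKV eqxx mul1r big1 ?addr0 // => k hk.
by rewrite permKV eq_sym (negbTE hk) mulr0.
Qed.

Lemma spat_mono (i i' : 'I_N.+2) (j : 'I_N) : 0 < delta -> (i <= i')%N ->
  spat (kvert delta z pi i) j 0 <= spat (kvert delta z pi i') j 0.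
Proof.
move=> hd hi; rewrite /spat mxE [X in _ <= X]mxE.
 rewrite !kvertE lerD2l; apply: sum_mono => // k.
apply: mulr_ge0; last by rewrite ler0n.
by case: ifP => _; [rewrite ler01 | apply: ltW].
Qed.

Lemma lift_mono (r : 'I_N.+2) (j : 'I_N.+1) : (lift r ord0 <= lift r j)%N.
Proof. rewrite /= /bump; case h: (r <= 0)%N => //=; by rewrite (leq_trans h (leq0n j)). Qed.

Lemma enorm_sq (x : 'cV[R]_N) : enorm x ^+ 2 = \sum_i x i 0 ^+ 2.
Proof. by rewrite /enorm sqr_sqrtr // sumr_ge0 // => i _; rewrite sqr_ge0. Qed.
End H.

Theorem mainTheorem3 (R : rcfType) (N : nat) (G : 'cV[R]_N -> 'cV[R]_N)
  (k0 kG kh delta : R) (c : 'cV[R]_N) (z : 'I_N -> int) (pi : 'S_N.+1)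
  (r : 'I_N.+2) :
  monotone_on_nonneg G ->
  0 < k0 -> 0 < kh -> kh < kG -> 0 < delta ->
  nonneg c -> enorm c < kG / 2 ->
  (forall j, nonneg (spat (fvert delta z pi r j))) ->
  (forall j, kG + k0 + delta < enorm (spat (fvert delta z pi r j))) ->
  ~ complete G k0 kG kh c (fvert delta z pi r).
Proof.
move=> [Gnn _] hk0 hkh hkhG hd hc hcn hvnn hvn [W [hLW hW]].
set y := fvert delta z pi r in hvnn hvn hLW.
pose v j := spat (y j). pose t j := tim (y j).
pose a := v ord0.
pose l j := label G k0 kG kh c (v j) (t j).
have hw0 : forall j, 0 <= W j 0.
  move=> j; have [k [hk hk']] := hW j.
  case: (posnP (nat_of_ord k)) => hk0'.
    have ek : k = 0 by apply: val_inj.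
    by rewrite -ek ltW.
  by rewrite hk' // lexx.
have hsum : \sum_j W j 0 = 1.
  have := congr1 (fun M : 'M[R]_N.+1 => M 0 0) hLW; rewrite /= !mxE eqxx /= => h; apply: eq_trans h; apply: esym.
  apply: eq_bigr => j _; rewrite mxE.
  rewrite (_ : (0 : 'I_N.+1) = lshift N (0 : 'I_1)); last by apply: val_inj.
  by rewrite col_mxEu mxE mul1r.
have hrow : forall i : 'I_N, \sum_j l j i 0 * W j 0 = 0.
  move=> i; have := congr1 (fun M : 'M[R]_N.+1 => M (rshift 1 i) 0) hLW.
  rewrite /= !mxE /= => h; apply: eq_trans h; apply: esym.
  by apply: eq_bigr => j _; rewrite mxE col_mxEd.
have ha : kG < enorm a.
  have := hvn ord0; rewrite -/(v ord0) -/a => h.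
  lra.
have key : forall j, \sum_i a i 0 * l j i 0 < 0.
  move=> j.
  set n := enorm (v j).
  have hn : kG + k0 + delta < n by apply: hvn.
  set s := 1 + Num.min 0 ((kG - 2 * n) / (n + k0)).
  have hs : s <= 0.
    have hq : (kG - 2 * n) / (n + k0) <= -1.
      by rewrite ler_pdivrMr; lra.
    have hmin : Num.min 0 ((kG - 2 * n) / (n + k0)) <= (kG - 2 * n) / (n + k0).
      by rewrite ge_min lexx orbT.
    rewrite /s; lra.
  have hm : Num.max 0 (kh - 2 * n) = 0 by rewrite max_l //; lra.
  have ht : 0 <= t j <= 1 by apply: tim_bounds.
  move: ht => /andP [ht0 ht1].
  apply: (le_lt_trans (y := \sum_i (c i 0 ^+ 2 - 3/4 * a i 0 ^+ 2))).
    apply: ler_sum => i _.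
    have -> : l j i 0 = (1 - t j) * c i 0 + t j * (s * G (v j) i 0) - v j i 0.
      by rewrite /l /label /vartheta /phi !mxE -/n -/s hm mul0r addr0.
    have hai : 0 <= a i 0 := hvnn ord0 i.
    have hav : a i 0 <= v j i 0.
      by apply: spat_mono => //; apply: lift_mono.
    have hci : 0 <= c i 0 := hc i.
    have hg : 0 <= G (v j) i 0 := Gnn _ (hvnn j) i.
    have h1 : 0 <= a i 0 * c i 0 * t j by rewrite !mulr_ge0.
    have h2 : a i 0 * t j * (s * G (v j) i 0) <= 0.
      by rewrite mulr_ge0_le0 ?mulr_ge0 // mulr_le0_ge0.
    have h3 : a i 0 * a i 0 <= a i 0 * v j i 0 by rewrite ler_wpM2l.
    have h4 := sqr_ge0 (a i 0 / 2 - c i 0).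
    nra.
  rewrite sumrB -mulr_sumr -!enorm_sq.
  have := sqrtr_ge0 (\sum_i c i 0 ^+ 2); rewrite -/(enorm c) => hc0.
  nra.
have [j0 hj0] : exists j0, 0 < W j0 0.
  case: (boolP [exists j, 0 < W j 0]) => [/existsP // | /existsP hne].
  exfalso; move: hsum; rewrite big1 => [/eqP|j _]; first by rewrite eq_sym oner_eq0.
  apply/eqP; rewrite eq_le hw0 andbT leNgt; apply/negP => h; apply: hne; by exists j.
have : \sum_i a i 0 * (\sum_j l j i 0 * W j 0) = 0.
  by rewrite big1 // => i _; rewrite hrow mulr0.
under eq_bigr do rewrite mulr_sumr.
rewrite exchange_big /= (bigD1 j0) //=.
have hrest : \sum_(j | j != j0) \sum_i a i 0 * (l j i 0 * W j 0) <= 0.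
  apply: sumr_le0 => j _.
  rewrite (eq_bigr (fun i => (a i 0 * l j i 0) * W j 0)); last by move=> i _; rewrite mulrA.
  by rewrite -mulr_suml mulr_le0_ge0 // ltW // key.
rewrite (eq_bigr (fun i => (a i 0 * l j0 i 0) * W j0 0)); last by move=> i _; rewrite mulrA.
rewrite -mulr_suml.
have := key j0; move: hrest; set S := \sum_(j | _) _; set K := \sum_i _.
move=> hr hk he; nra.
Qed.
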